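(* Let $\mathbb{F}_q$ be a finite field, and let $N, L$ be integers with $1 \le L \le N/2$ and $q \ge N+L$. Let $\alpha_1,\dots,\alpha_N,f_1,\dots,f_L$ be $N+L$ pairwise distinct elements of $\mathbb{F}_q$, write $\bm\alpha=(\alpha_1,\dots,\alpha_N)$, $\bm f=(f_1,\dots,f_L)$, let $u_1,\dots,u_N\in\mathbb{F}_q$ be arbitrary nonzero elements, $\bm u=(u_1,\dots,u_N)$, and define $\bm v=(v_1,\dots,v_N)$ by $$v_j=\frac{1}{u_j}\Big(\prod_{i\in[N],\,i\neq j}(\alpha_j-\alpha_i)\Big)^{-1},\qquad j\in[N].$$ Let $\mathbf{Q}^{\bm u}_N=\mathrm{QCSA}^q_{N,L}(\bm\alpha,\bm u,\bm f)$ and $\mathbf{Q}^{\bm v}_N=\mathrm{QCSA}^q_{N,L}(\bm\alpha,\bm v,\bm f)$. Then the block-diagonal matrix $\mathbf{B}=\begin{pmatrix}\mathbf{Q}^{\bm u}_N&\mathbf{0}\\ \mathbf{0}&\mathbf{Q}^{\bm v}_N\end{pmatrix}\in\mathbb{F}_q^{2N\times 2N}$ is invertible, and the matrix $$\mathbf{M}_Q=\mathbf{S}\,\mathbf{B}^{-1}\in\mathbb{F}_q^{N\times 2N}$$ is the channel matrix of a feasible $N$-sum box over $\mathbb{F}_q$; that is, there exist $\mathbf{G},\mathbf{H}\in\mathbb{F}_q^{2N\times N}$ such that $\mathbf{G}$ is strongly self-orthogonal, the square matrix $(\mathbf{G}\ \mathbf{H})\in\mathbb{F}_q^{2N\times 2N}$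 is invertible, and $\mathbf{M}_Q=(\mathbf{0}_N\ \ \mathbf{I}_N)(\mathbf{G}\ \mathbf{H})^{-1}$. Here $\mathbf{S}\in\mathbb{F}_q^{N\times 2N}$ is the $0/1$ selection matrix $$\mathbf{S}=\left[\begin{array}{ccc|ccc} \mathbf{I}_L&\mathbf{0}_{L\times \lceil N/2\rceil}&\mathbf{0}&\mathbf{0}&\mathbf{0}&\mathbf{0}\\ \mathbf{0}&\mathbf{0}&\mathbf{I}_{\lfloor N/2\rfloor -L}&\mathbf{0}&\mathbf{0}&\mathbf{0}\\ \mathbf{0}&\mathbf{0}&\mathbf{0}&\mathbf{I}_L&\mathbf{0}_{L\times \lfloor N/2\rfloor }&\mathbf{0}\\ \mathbf{0}&\mathbf{0}&\mathbf{0}&\mathbf{0}&\mathbf{0}&\mathbf{I}_{\lceil N/2\rceil -L} \end{array}\right],$$ i.e., for $\mathbf{z}\in\mathbb{F}_q^{2N}$, $\mathbf{S}\mathbf{z}=(z_1,\dots,z_L,\ z_{L+\lceil N/2\rceil+1},\dots,z_N,\ z_{N+1},\dots,z_{N+L},\ z_{N+L+\lfloor N/2\rfloor+1},\dots,z_{2N})^\top$.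
   Context: For $\bm\alpha\in\mathbb{F}_q^{1\times n}$ with pairwise distinct entries and $\bm w=(w_1,\dots,w_n)\in\mathbb{F}_q^{1\times n}$ with nonzero entries, $\mathrm{GRS}^q_{n,k}(\bm\alpha,\bm w)$ denotes the $n\times k$ matrix whose $(i,m)$ entry is $w_i\alpha_i^{m-1}$ ($i\in[n]$, $m\in[k]$). For $\bm\beta=(\beta_1,\dots,\beta_N)$ with all $\beta_i\neq 0$, $\alpha_1,\dots,\alpha_N,f_1,\dots,f_L$ pairwise distinct, and $L\le N/2$, the matrix $\mathrm{QCSA}^q_{N,L}(\bm\alpha,\bm\beta,\bm f)\in\mathbb{F}_q^{N\times N}$ has $(i,j)$ entry $\frac{\beta_i}{f_j-\alpha_i}$ for $j\in[L]$ and $(i,L+k)$ entry $\beta_i\alpha_i^{k-1}$ for $k\in[N-L]$ (so its columns $L+1,\dots,L+\lceil N/2\rceil$ form $\mathrm{GRS}^q_{N,\lceil N/2\rceil}(\bm\alpha,\bm\beta)$). A matrix $\mathbf{G}\in\mathbb{F}_q^{2N\times N}$ is strongly self-orthogonal (SSO) iff $\mathrm{rk}(\mathbf{G})=N$ and $\mathbf{G}^\top\mathbf{J}\mathbf{G}=\mathbf{0}$, where $\mathbf{J}=\begin{pmatrix}\mathbf{0}&-\mathbf{I}_N\\ \mathbf{I}_N&\mathbf{0}\end{pmatrix}$. $\lfloor\cdot\rfloor,\lceil\cdot\rceil$ denote floor and ceiling; blocks of size zero are empty. *)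

(* Defs.v *)
From HB Require Import structures.
From mathcomp Require Import all_boot all_order all_algebra all_field.
Set Implicit Arguments. Unset Strict Implicit. Unset Printing Implicit Defensive.
Import GRing.Theory.
Local Open Scope ring_scope.

(* Indices are 0-based: row/column i : 'I_n corresponds to the paper's i+1. *)

Definition QCSA (F : fieldType) (N L : nat) (alpha beta : 'I_N -> F)
    (f : 'I_L -> F) : 'M[F]_N :=
  \matrix_(i < N, j < N)
    match @insub nat (fun k => k < L)%N _ (val j) with
    | Some j' => beta i / (f j' - alpha i)
    | None => beta i * alpha i ^+ (val j - L)
    end.

Definition dual_weights (F : fieldType) (N : nat) (alpha u : 'I_N -> F) :
    'I_N -> F :=
  fun j => (u j)^-1 * (\prod_(i < N | i != j) (alpha j - alpha i))^-1.

Definition Jmx (F : fieldType) (N : nat) : 'M[F]_(N + N) :=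
  block_mx 0 (- 1%:M) 1%:M 0.

Definition SSO (F : fieldType) (N : nat) (G : 'M[F]_(N + N, N)) : Prop :=
  \rank G = N /\ G^T *m Jmx F N *m G = 0.

(* Column (0-based) selected by row r of S. ceil(N/2) = N - N./2. *)
Definition sel_col (N L r : nat) : nat :=
  if (r < L)%N then r
  else if (r < N./2)%N then (r + (N - N./2))%N
  else if (r < N./2 + L)%N then (N + (r - N./2))%N
  else (N + r)%N.

Definition selS (F : fieldType) (N L : nat) : 'M[F]_(N, N + N) :=
  \matrix_(r < N, c < N + N) ((val c == sel_col N L r)%:R : F).

(* Main.v *)
Require Import Defs.
From HB Require Import structures.
From mathcomp Require Import all_boot all_order all_algebra all_field.
From mathcomp Require Import zify ring.
Set Implicit Arguments. Unset Strict Implicit.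
Import GRing.Theory.
Local Open Scope ring_scope.

Lemma size_prodX (F : fieldType) (I : finType) (P : pred I) (c : I -> F) :
  size (\prod_(i | P i) ('X - (c i)%:P)) = #|P|.+1.
Proof.
rewrite -big_filter -(big_map c xpredT (fun z => 'X - z%:P)) size_prod_XsubC.
by rewrite size_map cardE /enum_mem /index_enum -enumT.
Qed.

Lemma coef_prodX (F : fieldType) (I : finType) (P : pred I) (c : I -> F) :
  (\prod_(i | P i) ('X - (c i)%:P))`_#|P| = 1.
Proof.
have := monic_prod_XsubC (index_enum I) P c.
by move/monicP; rewrite lead_coefE size_prodX.
Qed.

Lemma lagrange_sum (F : fieldType) (N : nat) (a : 'I_N -> F) (m : nat) :
  injective a -> (m.+2 <= N)%N ->
  \sum_(x < N) a x ^+ m / \prod_(j < N | j != x) (a x - a j) = 0.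
Proof.
move=> ainj hm.
set d := fun x : 'I_N => \prod_(j < N | j != x) (a x - a j).
have dn0 x : d x != 0.
  apply/prodf_neq0 => j hj; rewrite subr_eq0; apply/eqP => /ainj e.
  by rewrite e eqxx in hj.
set l := fun x : 'I_N => \prod_(j < N | j != x) ('X - (a j)%:P).
have cardP (x : 'I_N) : #|[pred j : 'I_N | j != x]| = N.-1.
  by have := cardC1 x; rewrite card_ord.
have szl x : size (l x) = N.
  by rewrite /l size_prodX cardP prednK //; lia.
set p := \sum_(x < N) (a x ^+ m / d x) *: l x - 'X^m.
have szp : (size p <= N)%N.
  rewrite /p; apply: leq_trans (size_polyD _ _) _; rewrite geq_max size_polyN size_polyXn.
  apply/andP; split; last by lia.
  apply: (big_ind (fun q : {poly F} => size q <= N)%N) => //.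
  - by rewrite size_poly0.
  - by move=> q1 q2 h1 h2; apply: leq_trans (size_polyD _ _) _; rewrite geq_max h1 h2.
  - by move=> x _; apply: leq_trans (size_scale_leq _ _) _; rewrite szl.
have lev x y : (l x).[a y] = if x == y then d y else 0.
  rewrite /l horner_prod; case: eqP => [->|/eqP nxy].
    by apply: eq_bigr => j _; rewrite hornerXsubC.
  rewrite (bigD1 y) 1?eq_sym //= hornerXsubC subrr mul0r //.
have rp y : p.[a y] = 0.
  rewrite /p hornerD hornerN hornerXn horner_sum (bigD1 y) //= big1.
    by rewrite hornerZ lev eqxx addr0 mulfVK // subrr.
  by move=> x /negbTE hx; rewrite hornerZ lev hx mulr0.
have p0 : p = 0.
  apply/eqP; apply/negPn/negP => pn0.
  have := max_poly_roots pn0 (rs := [seq a x | x <- enum 'I_N]).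
  rewrite size_map size_enum_ord.
  have -> : all (root p) [seq a x | x <- enum 'I_N].
    by apply/allP => z /mapP [y _ ->]; apply/eqP/rp.
  rewrite map_inj_uniq ?enum_uniq // => /(_ isT isT); rewrite ltnNge szp.
  by [].
have := congr1 (fun q : {poly F} => q`_N.-1) p0.
rewrite coef0 /p coefB coefXn coef_sum.
have -> : (N.-1 == m) = false by apply/eqP; lia.
rewrite subr0 => h; rewrite -[RHS]h; apply: eq_bigr => x _.
by rewrite coefZ /l -(cardP x) coef_prodX mulr1.
Qed.

Lemma prod_nz (F : fieldType) (N : nat) (a : 'I_N -> F) x :
  injective a -> \prod_(j < N | j != x) (a x - a j) != 0.
Proof.
move=> ainj; apply/prodf_neq0 => j hj; rewrite subr_eq0; apply/eqP => /ainj e.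
by rewrite e eqxx in hj.
Qed.

Lemma dual_nz (F : fieldType) (N : nat) (alpha u : 'I_N -> F) j :
  injective alpha -> (forall j, u j != 0) -> dual_weights alpha u j != 0.
Proof.
move=> ainj hu; rewrite /dual_weights mulf_neq0 // invr_eq0 //; exact: prod_nz.
Qed.

Lemma W0 (F : fieldType) (N L : nat) (alpha u : 'I_N -> F) (f : 'I_L -> F) (c d : 'I_N) :
  injective alpha -> (forall j, u j != 0) ->
  (L <= c)%N -> (L <= d)%N -> (((c - L) + (d - L)).+2 <= N)%N ->
  ((QCSA alpha u f)^T *m QCSA alpha (dual_weights alpha u) f) c d = 0.
Proof.
move=> ainj hu hc hd hm.
rewrite mxE -[RHS](lagrange_sum ainj hm); apply: eq_bigr => y _.
have hc' : (val c < L)%N = false by rewrite ltnNge hc.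
have hd' : (val d < L)%N = false by rewrite ltnNge hd.
rewrite !mxE !insubF //.
have h1 := hu y; have h2 := prod_nz y ainj.
by rewrite /dual_weights exprD; field; rewrite ?h1 ?h2.
Qed.

Lemma QCSA_unit (F : fieldType) (N L : nat) (alpha beta : 'I_N -> F) (f : 'I_L -> F) :
  (L <= N)%N -> injective alpha -> injective f -> (forall i j, alpha i != f j) ->
  (forall i, beta i != 0) -> QCSA alpha beta f \in unitmx.
Proof.
move=> hLN ainj finj haf hb.
rewrite unitmxE unitfE -det_tr; apply/negP => /det0P [v vn0 hv].
set x := fun j : 'I_N => v 0 j.
have hQ i : \sum_j x j * QCSA alpha beta f i j = 0.
  have := congr1 (fun A : 'rV_N => A 0 i) hv; rewrite !mxE => h.
  by rewrite -[RHS]h; apply: eq_bigr => j _; rewrite !mxE.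
set D := \prod_(k < L) ('X - (f k)%:P).
set Dk := fun k : 'I_L => \prod_(k' < L | k' != k) ('X - (f k')%:P).
set T := fun j : 'I_N => match @insub nat (fun k => k < L)%N _ (val j) with
    | Some k => - Dk k | None => D * 'X^(val j - L) end.
set P := \sum_j x j *: T j.
have DkE k (z : F) : D.[z] = (z - f k) * (Dk k).[z].
  by rewrite /D /Dk !horner_prod (bigD1 k) //= hornerXsubC.
have PE i : P.[alpha i] = D.[alpha i] / beta i * \sum_j x j * QCSA alpha beta f i j.
  rewrite /P horner_sum mulr_sumr; apply: eq_bigr => j _.
  rewrite hornerZ [RHS]mulrCA; congr (_ * _); rewrite /T mxE.
  case: (@insub nat (fun k => k < L)%N _ (val j)) => [k|].
    have h1 : f k - alpha i != 0 by rewrite subr_eq0 eq_sym haf.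
    have h2 := hb i.
    by rewrite hornerN (DkE k); field; rewrite h1 h2.
  have h2 := hb i.
  by rewrite hornerM hornerXn; field.
have P0 : P = 0.
  have szP : (size P <= N)%N.
    apply: (big_ind (fun q : {poly F} => size q <= N)%N) => //.
    - by rewrite size_poly0.
    - by move=> q1 q2 h1 h2; apply: leq_trans (size_polyD _ _) _; rewrite geq_max h1 h2.
    move=> j _; apply: leq_trans (size_scale_leq _ _) _; rewrite /T.
    case: insubP => [k hk ek|hk].
      rewrite size_polyN /Dk size_prodX.
      have := cardC1 k; rewrite card_ord => ->.
      by rewrite prednK //; case: (k) => /= ??; lia.
    apply: leq_trans (size_mul_leq _ _) _.
    rewrite /D size_prodX card_ord size_polyXn; case: j hk => /= j hj hk; lia.
  apply/eqP; apply/negPn/negP => pn0.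
  have := max_poly_roots pn0 (rs := [seq alpha x | x <- enum 'I_N]).
  rewrite size_map size_enum_ord.
  have -> : all (root P) [seq alpha x | x <- enum 'I_N].
    by apply/allP => z /mapP [y _ ->]; apply/eqP; rewrite PE hQ mulr0.
  rewrite map_inj_uniq ?enum_uniq // => /(_ isT isT); rewrite ltnNge szP.
  by [].
have x1 (k : 'I_L) : x (widen_ord hLN k) = 0.
  have := congr1 (fun q : {poly F} => q.[f k]) P0.
  rewrite hornerE /P horner_sum (bigD1 (widen_ord hLN k)) //= big1.
    rewrite addr0 hornerZ /T; case: insubP => [k' _ ek|]; last by move=> /negP[]; rewrite /= ltn_ord.
    have -> : k' = k by apply: val_inj.
    move/eqP; rewrite mulf_eq0 => /orP [/eqP //|].
    rewrite hornerN oppr_eq0 /Dk horner_prod => h0; exfalso; move: h0; apply/negP.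
    apply/prodf_neq0 => j hj; rewrite hornerXsubC subr_eq0; apply/negP => /eqP /finj e.
    by rewrite e eqxx in hj.
  move=> j hj; rewrite hornerZ /T; case: insubP => [k' _ ek|_].
    have hk : k != k'.
      apply/negP => /eqP e; move: hj; rewrite -val_eqE /= -ek e eqxx //.
    rewrite hornerN /Dk horner_prod (bigD1 k) //= hornerXsubC subrr.
    by rewrite mul0r oppr0 mulr0.
  by rewrite hornerM (DkE k) subrr !mul0r mulr0.
set Y := \sum_j (x j * (~~ (val j < L)%N)%:R) *: 'X^(val j - L).
have PY : P = D * Y.
  rewrite /P /Y mulr_sumr; apply: eq_bigr => j _; rewrite /T.
  case: insubP => [k hk ek|hk].
    have -> : x j = 0 by rewrite -(x1 k); congr x; apply: val_inj.
    by rewrite hk !mul0r !scale0r mulr0.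
  by rewrite hk mulr1 scalerAr.
have Y0 : Y = 0.
  have : D * Y == 0 by rewrite -PY P0.
  have Dn0 : D != 0 by apply: monic_neq0; apply: monic_prod_XsubC.
  by rewrite mulf_eq0 (negbTE Dn0) /= => /eqP.
have x2 (j : 'I_N) : ~~ (val j < L)%N -> x j = 0.
  move=> hj; have := congr1 (fun q : {poly F} => q`_(val j - L)) Y0.
  rewrite coef0 /Y coef_sum (bigD1 j) //= big1.
    by rewrite addr0 coefZ coefXn eqxx hj !mulr1.
  move=> i hi; rewrite coefZ coefXn.
  case: (boolP (val i < L)%N) => hil; first by rewrite /= mulr0 mul0r.
  case: eqP => e; last by rewrite mulr0.
  by move: hi; rewrite -val_eqE; move: hil hj e; case: i; case: j => /= ????? e; lia.
move/negP: vn0; apply; apply/eqP/rowP => j; rewrite mxE.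
case: (boolP (val j < L)%N) => hj; last by apply: x2.
by have := x1 (Ordinal hj); rewrite /x; congr (v 0 _ = _); apply: val_inj.
Qed.

Definition gn (N L r : nat) : nat :=
  if (r < N)%N then (if (r < N - N./2)%N then (L + r)%N else (N + L + (r - (N - N./2)))%N)
  else sel_col N L (r - N).

Lemma half_facts N : (N./2 + N./2 <= N /\ N <= N./2 + N./2 + 1)%N.
Proof. have := odd_double_half N. rewrite -addnn. case: (odd N) => /= <-; lia. Qed.

Lemma gn_lt N L r : (L.*2 <= N)%N -> (r < N + N)%N -> (gn N L r < N + N)%N.
Proof.
move=> hL hr; have [h1 h2] := half_facts N; rewrite /gn /sel_col.
move: (N./2) h1 h2 => h h1 h2.
do ! case: ifP => ?; lia.
Qed.

Lemma gn_inj N L r1 r2 : (L.*2 <= N)%N -> (r1 < N + N)%N -> (r2 < N + N)%N ->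
  gn N L r1 = gn N L r2 -> r1 = r2.
Proof.
move=> hL hr1 hr2; have [h1 h2] := half_facts N; rewrite /gn /sel_col.
move: (N./2) h1 h2 => h h1 h2.
do ! case: ifP => ?; lia.
Qed.

Definition Pm (F : fieldType) N L : 'M[F]_(N + N) :=
  \matrix_(r, c) ((val c == gn N L r)%:R).

Lemma Pm_orth (F : fieldType) N L : (L.*2 <= N)%N -> Pm F N L *m (Pm F N L)^T = 1%:M.
Proof.
move=> hL; apply/matrixP => r1 r2; rewrite !mxE.
have h1 := gn_lt hL (ltn_ord r1).
rewrite (bigD1 (Ordinal h1)) //= big1 ?addr0.
  rewrite !mxE /= eqxx mul1r.
  case: (eqVneq r1 r2) => [->|ne]; first by rewrite eqxx.
  rewrite (_ : (gn N L r1 == gn N L r2) = false) //.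
  apply/negbTE/eqP => e; move/eqP: ne; apply; apply: val_inj.
  exact: (gn_inj hL (ltn_ord r1) (ltn_ord r2) e).
move=> c hc; rewrite !mxE (_ : (val c == gn N L r1) = false) ?mul0r //.
apply/negbTE; move: hc; apply: contra => /eqP e; apply/eqP/val_inj => /=; exact: e.
Qed.

Unset Implicit Arguments.
Theorem theorem1 (F : finFieldType) (N L : nat)
    (alpha : 'I_N -> F) (f : 'I_L -> F) (u : 'I_N -> F) :
  (1 <= L)%N -> (L.*2 <= N)%N -> (N + L <= #|F|)%N ->
  injective alpha -> injective f -> (forall i j, alpha i != f j) ->
  (forall j, u j != 0) ->
  let Qu := QCSA alpha u f in
  let Qv := QCSA alpha (dual_weights alpha u) f in
  let B : 'M[F]_(N + N) := block_mx Qu 0 0 Qv in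
  B \in unitmx /\
  exists G H : 'M[F]_(N + N, N),
    SSO G /\ row_mx G H \in unitmx /\
    selS F N L *m invmx B
      = row_mx (0 : 'M[F]_(N, N)) (1%:M : 'M[F]_N) *m invmx (row_mx G H).
Proof.
move=> hL1 hL2 hq ainj finj haf hu Qu Qv B.
have hLN : (L <= N)%N by lia.
have hQu : Qu \in unitmx := QCSA_unit hLN ainj finj haf hu.
have hQv : Qv \in unitmx := QCSA_unit hLN ainj finj haf (fun j => dual_nz j ainj hu).
have hB : B \in unitmx.
  by rewrite unitmxE det_ublock unitrM -!unitmxE hQu hQv.
split => //.
set P := Pm F N L.
have PPt : P *m P^T = 1%:M := Pm_orth F hL2.
have PtP : P^T *m P = 1%:M := mulmx1C PPt.
have hPt : P^T \in unitmx by case: (mulmx1_unit PtP).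
set M := B *m P^T.
have hM : M \in unitmx by rewrite unitmx_mul hB hPt.
have iM : invmx M = P *m invmx B.
  have h : M *m (P *m invmx B) = 1%:M.
    by rewrite /M -mulmxA (mulmxA P^T) PtP mul1mx mulmxV.
  by rewrite -[LHS]mulmx1 -h mulKmx.
exists (lsubmx M), (rsubmx M); rewrite hsubmxK.
split; last split => //; last first.
  rewrite iM mulmxA; congr (_ *m _).
  rewrite -[P]vsubmxK mul_row_col mul0mx add0r mul1mx.
  apply/matrixP => r c; rewrite !mxE /= /gn ltnNge leq_addr /= addKn //.
split.
  have K : usubmx (invmx M) *m lsubmx M = 1%:M.
    have h := mulVmx hM.
    have : col_mx (usubmx (invmx M)) (dsubmx (invmx M)) *m row_mx (lsubmx M) (rsubmx M)
      = block_mx 1%:M 0 0 1%:M by rewrite vsubmxK hsubmxK h -scalar_mx_block.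
    by rewrite mul_col_row => /eq_block_mx [-> _ _ _].
  apply/eqP; rewrite eqn_leq rank_leq_col /=.
  by rewrite -{1}(mxrank1 F N) -K mxrankM_maxr.
have GE : lsubmx M = col_mx (Qu *m (lsubmx (usubmx P))^T) (Qv *m (rsubmx (usubmx P))^T).
  rewrite /M -mulmx_lsub -trmx_usub -{1}[usubmx P]hsubmxK tr_row_mx /B mul_block_col.
  by rewrite !mul0mx addr0 add0r.
rewrite GE; set G1 := Qu *m _; set G2 := Qv *m _.
have P11E (r c : 'I_N) : lsubmx (usubmx P) r c = ((c : nat) == gn N L r)%:R by rewrite !mxE.
have P12E (r c : 'I_N) : rsubmx (usubmx P) r c = ((N + (c : nat))%N == gn N L r)%:R by rewrite !mxE.
have key : G1^T *m G2 = 0.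
  rewrite /G1 /G2 trmx_mul trmxK mulmxA -(mulmxA _ Qu^T).
  apply/matrixP => r1 r2; rewrite [LHS]mxE [RHS]mxE; apply: big1 => d _.
  rewrite [X in _ * X]mxE P12E; case: eqP => e2; last by rewrite mulr0.
  rewrite mulr1 mxE; apply: big1 => c _; rewrite P11E.
  case: eqP => e1; last by rewrite mul0r.
  rewrite mul1r.
  have [hc [hd hm]] : (L <= c /\ L <= d /\ ((c - L) + (d - L)).+2 <= N)%N.
    move: e1 e2; rewrite /gn !ltn_ord; have [h1 h2] := half_facts N.
    have := ltn_ord c; have := ltn_ord d; have := ltn_ord r1; have := ltn_ord r2.
    move: (N./2) h1 h2 => h h1 h2.
    do ! case: ifP => ?; lia.
  exact: W0.
have key2 : G2^T *m G1 = 0 by rewrite -[G1]trmxK -trmx_mul key trmx0.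
rewrite /Jmx tr_col_mx mul_row_block !mulmx0 !mulmx1 addr0 add0r mulmxN mul_row_col.
by rewrite mulNmx mulmx1 key key2 oppr0 addr0.
Qed.
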